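(* Let $n$ be even, $V=\{1,\dots,n\}$, and let $\{C,\bar C\}$ be a partition of $V$ with $|C|=|\bar C|=n/2$. Let $0\le p_{\rm out}$, $p_{\rm in}\le1$ with $0<p_{\rm in}+p_{\rm out}<2$. Let $A$ be the random symmetric $\{0,1\}$ adjacency matrix of the stochastic block model: its entries are independent Bernoulli variables (up to symmetry), with $a_{ij}=1$ with probability $p_{\rm in}$ if $i,j$ lie in the same set of the partition and with probability $p_{\rm out}$ otherwise. Let $M=A-\frac{\mathbb{1}^\top A\mathbb{1}}{n^2}J$ be its modularity matrix, let $z\in\mathbb{R}^n$ with $z_i=1$ if $i\in C$ and $z_i=-1$ otherwise, $Z=zz^\top$, and $$\gamma=\frac{p_{\rm in}-p_{\rm out}}{\sqrt{(p_{\rm in}+p_{\rm out})(2-p_{\rm in}-p_{\rm out})}}.$$ Then for every fixed $\varepsilon>0$, the probability that $\cos(M,Z)^2\ge\gamma^2-\varepsilon$ tends to $1$ as $n\to\infty$.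
   Context: $\mathbb{1}$ is the all-ones vector and $J=\mathbb{1}\mathbb{1}^\top$ the all-ones matrix. For nonzero matrices, $\cos(A,B)=\mathrm{tr}(AB^\top)/(\|A\|_F\|B\|_F)$ with $\|\cdot\|_F$ the Frobenius norm. *)

(* Defs.v *)
From HB Require Import structures.
From mathcomp Require Import all_boot all_order all_algebra.
Set Implicit Arguments. Unset Strict Implicit. Unset Printing Implicit Defensive.
Import Order.TTheory GRing.Theory Num.Theory.
Local Open Scope ring_scope.

Section SBM.
Variable R : archiRealFieldType.

Definition frob2 (m n : nat) (A : 'M[R]_(m, n)) : R :=
  \sum_(i < m) \sum_(j < n) A i j ^+ 2.

(* cos(A,B)^2 = tr(A B^T)^2 / (||A||_F^2 ||B||_F^2)  (square written out,
   avoiding square roots) *)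
Definition cos2 (n : nat) (A B : 'M[R]_n) : R :=
  (\tr (A *m B^T)) ^+ 2 / (frob2 A * frob2 B).

Definition sbm_p (n : nat) (pin pout : R) (C : {set 'I_n}) (i j : 'I_n) : R :=
  if (i \in C) == (j \in C) then pin else pout.

(* probability weight of a symmetric boolean matrix: independent Bernoulli
   entries a_ij for i <= j *)
Definition sbm_weight (n : nat) (pin pout : R) (C : {set 'I_n})
    (A : 'M[bool]_n) : R :=
  \prod_(i < n) \prod_(j < n | (i <= j)%N)
     (if A i j then sbm_p pin pout C i j else 1 - sbm_p pin pout C i j).

Definition sbm_prob (n : nat) (pin pout : R) (C : {set 'I_n})
    (E : pred 'M[bool]_n) : R :=
  \sum_(A : 'M[bool]_n | (A^T == A) && E A) sbm_weight pin pout C A.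

Definition adjR (n : nat) (A : 'M[bool]_n) : 'M[R]_n :=
  map_mx (fun b : bool => (b : nat)%:R) A.

Definition modularity (n : nat) (A : 'M[R]_n) : 'M[R]_n :=
  A - ((\sum_(i < n) \sum_(j < n) A i j) / (n%:R ^+ 2)) *: const_mx 1.

Definition zvec (n : nat) (C : {set 'I_n}) : 'cV[R]_n :=
  \col_i (if i \in C then 1 else -1).
Definition Zmat (n : nat) (C : {set 'I_n}) : 'M[R]_n :=
  zvec C *m (zvec C)^T.

Definition gamma2 (pin pout : R) : R :=
  (pin - pout) ^+ 2 / ((pin + pout) * (2 - pin - pout)).

(* the event  cos(M,Z)^2 >= gamma^2 - eps  (M nonzero so that cos is defined) *)
Definition good_event (n : nat) (pin pout eps : R) (C : {set 'I_n})
    (A : 'M[bool]_n) : bool :=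
  (modularity (adjR A) != 0) &&
  (gamma2 pin pout - eps <= cos2 (modularity (adjR A)) (Zmat C)).

End SBM.

(* Main.v *)
Require Import Defs.
From HB Require Import structures.
From mathcomp Require Import all_boot all_order all_algebra.
From mathcomp Require Import ring lra zify.
Set Implicit Arguments. Unset Strict Implicit. Unset Printing Implicit Defensive.
Import Order.TTheory GRing.Theory Num.Theory.
Local Open Scope ring_scope.

Section S.
Variable R : archiRealFieldType.
Variable n : nat.
Notation I := ('I_n * 'I_n)%type.
Definition up (e : I) : bool := (e.1 <= e.2)%N.

Definition hsym (f : {ffun I -> bool}) : 'M[bool]_n :=
  \matrix_(i, j) (if (i <= j)%N then f (i, j) else f (j, i)).
Definition hinv (A : 'M[bool]_n) : {ffun I -> bool} :=
  [ffun e => if up e then A e.1 e.2 else false].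

Lemma sym_prod (F : 'I_n -> 'I_n -> bool -> R) :
  \sum_(A : 'M[bool]_n | A^T == A) \prod_(e : I | up e) F e.1 e.2 (A e.1 e.2)
  = \prod_(e : I | up e) (F e.1 e.2 true + F e.1 e.2 false).
Proof.
pose Q (e : I) : pred bool := if up e then predT else pred1 false.
pose F' (e : I) (b : bool) := if up e then F e.1 e.2 b else 1.
have -> : \prod_(e : I | up e) (F e.1 e.2 true + F e.1 e.2 false)
   = \prod_(e : I) \sum_(b | Q e b) F' e b.
  rewrite [RHS](bigID up) /= [X in _ * X]big1 ?mulr1; last first.
    move=> e /negbTE He; rewrite /Q /F' He big_pred1_eq //.
  apply: eq_bigr => e He; rewrite /Q /F' He big_bool /=.
  by rewrite addrC.
rewrite bigA_distr_big_dep.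
rewrite (reindex_onto hsym hinv); last first.
  move=> A /eqP HA; apply/matrixP => i j; rewrite /hsym /hinv !mxE !ffunE /up /=.
  case: (leqP i j) => // Hij; rewrite -[in RHS]HA mxE.
  by rewrite ifT // ltnW.
apply: eq_big.
  move=> f; apply/idP/idP.
    move=> /andP [_ /eqP <-]; apply/familyP => e; rewrite /Q ffunE.
    by case: (up e).
  move=> /familyP Hf; apply/andP; split.
    apply/eqP/matrixP => i j; rewrite /hsym !mxE.
    case: (ltngtP i j) => Hij.
    - by [].
    - by [].
    - have -> : i = j by apply: val_inj.
      by [].
  apply/eqP/ffunP => e; rewrite /hinv /hsym !ffunE.
  case He: (up e); first by move: He; rewrite /up mxE => ->; rewrite -surjective_pairing.
  by have := Hf e; rewrite /Q He inE => /eqP ->.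
move=> f _.
rewrite [RHS](bigID up) /= [X in _ * X]big1 ?mulr1; last first.
  by move=> e /negbTE He; rewrite /F' He.
apply: eq_bigr => e He; rewrite /F' He /hsym mxE.
by move: He; rewrite /up => ->; rewrite -surjective_pairing.
Qed.

Variables (pin pout : R) (C : {set 'I_n}).
Hypothesis (Hpin : 0 <= pin <= 1) (Hpout : 0 <= pout <= 1).
Definition pp (e : I) : R := if (e.1 \in C) == (e.2 \in C) then pin else pout.
Definition wt (e : I) (b : bool) : R := if b then pp e else 1 - pp e.
Definition W (A : 'M[bool]_n) : R := \prod_(e : I | up e) wt e (A e.1 e.2).
Definition Ex (X : 'M[bool]_n -> R) : R := \sum_(A : 'M[bool]_n | A^T == A) W A * X A.

Lemma pp01 e : 0 <= pp e <= 1.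
Proof. by rewrite /pp; case: ifP. Qed.

Lemma W_ge0 A : 0 <= W A.
Proof.
apply: prodr_ge0 => e _; have /andP[H0 H1] := pp01 e.
by rewrite /wt; case: (A _ _) => //; rewrite subr_ge0.
Qed.

Lemma Ex_ext X Y : (forall A, X A = Y A) -> Ex X = Ex Y.
Proof. by move=> H; apply: eq_bigr => A _; rewrite H. Qed.

Lemma Ex_prod (g : I -> bool -> R) :
  Ex (fun A => \prod_(e : I | up e) g e (A e.1 e.2))
  = \prod_(e : I | up e) (pp e * g e true + (1 - pp e) * g e false).
Proof.
rewrite /Ex /W.
under eq_bigr => A _ do rewrite -big_split /=.
transitivity (\sum_(A : 'M[bool]_n | A^T == A) \prod_(e : I | up e)
   (fun i j b => wt (i, j) b * g (i, j) b) e.1 e.2 (A e.1 e.2)).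
  by apply: eq_bigr => A _; apply: eq_bigr => e _; rewrite /= -surjective_pairing.
etransitivity; first exact: (sym_prod (fun i j b => wt (i, j) b * g (i, j) b)).
apply: eq_bigr => e _.
by rewrite /= -surjective_pairing /wt.
Qed.

Lemma Ex1 : Ex (fun _ => 1) = 1.
Proof.
have := Ex_prod (fun _ _ => 1).
rewrite big1 // => ->; apply: big1 => e _; rewrite !mulr1.
by rewrite addrC subrK.
Qed.

Lemma ExD X Y : Ex (fun A => X A + Y A) = Ex X + Ex Y.
Proof. by rewrite /Ex -big_split; apply: eq_bigr => A _; rewrite mulrDr. Qed.

Lemma ExZ c X : Ex (fun A => c * X A) = c * Ex X.
Proof. by rewrite /Ex mulr_sumr; apply: eq_bigr => A _; rewrite mulrCA. Qed.

Lemma Ex_sum (X : I -> 'M[bool]_n -> R) (P : pred I) :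
  Ex (fun A => \sum_(e | P e) X e A) = \sum_(e | P e) Ex (X e).
Proof.
rewrite /Ex exchange_big; apply: eq_bigr => A _; by rewrite mulr_sumr.
Qed.

Lemma Ex_le X Y : (forall A, A^T == A -> X A <= Y A) -> Ex X <= Ex Y.
Proof.
move=> H; apply: ler_sum => A HA; apply: ler_wpM2l; first exact: W_ge0.
exact: H.
Qed.

Definition Yc (e : I) (A : 'M[bool]_n) : R := ((A e.1 e.2 : nat)%:R - pp e).

Lemma prod_pick (P : pred I) (x : I -> R) e :
  P e -> \prod_(u | P u) (if u == e then x u else 1) = x e.
Proof.
move=> He; rewrite (bigD1 e) //= eqxx big1 ?mulr1 //.
by move=> u /andP[_ /negbTE ->].
Qed.

Lemma cov e f : up e -> up f ->
  Ex (fun A => Yc e A * Yc f A) = if e == f then pp e * (1 - pp e) else 0.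
Proof.
move=> He Hf.
pose g (u : I) (b : bool) := (if u == e then (b : nat)%:R - pp u else 1)
                           * (if u == f then (b : nat)%:R - pp u else 1).
rewrite (@Ex_ext _ (fun A => \prod_(u : I | up u) g u (A u.1 u.2))); last first.
  move=> A; rewrite big_split /=.
  rewrite (prod_pick (fun u => (A u.1 u.2 : nat)%:R - pp u)) //.
  by rewrite (prod_pick (fun u => (A u.1 u.2 : nat)%:R - pp u)).
rewrite Ex_prod (bigD1 e) //= /g eqxx.
case: (eqVneq e f) => [<-|Hef].
  rewrite ?eqxx big1 ?mulr1; first by rewrite /=; ring.
  by move=> u /andP[_ /negbTE ->]; rewrite !mulr1 addrC subrK.
rewrite !mulr1.
have -> : pp e * (true%:R - pp e) + (1 - pp e) * (false%:R - pp e) = 0 by rewrite /=; ring.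
by rewrite mul0r.
Qed.

Lemma var_bound (c : I -> R) :
  Ex (fun A => (\sum_(e | up e) c e * Yc e A) ^+ 2) <= \sum_(e | up e) c e ^+ 2.
Proof.
rewrite (@Ex_ext _ (fun A => \sum_(e | up e) \sum_(f | up f)
    (c e * c f) * (Yc e A * Yc f A))); last first.
  move=> A; rewrite expr2 mulr_suml; apply: eq_bigr => e _.
  rewrite mulr_sumr; apply: eq_bigr => f _; ring.
rewrite Ex_sum; apply: ler_sum => e He.
rewrite Ex_sum (bigD1 e) //= big1 ?addr0; last first.
  move=> f /andP[Hf Hfe]; rewrite ExZ cov // eq_sym (negbTE Hfe); exact: mulr0.
rewrite ExZ cov // eqxx expr2; apply: ler_piMr.
  by rewrite -expr2 sqr_ge0.
have /andP[H0 H1] := pp01 e; nra.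
Qed.

Lemma cheb (E : pred 'M[bool]_n) (X : 'M[bool]_n -> R) :
  (forall A, A^T == A -> E A -> 1 <= X A) -> (forall A, 0 <= X A) ->
  sbm_prob pin pout C E <= Ex X.
Proof.
move=> H1 H0.
have -> : sbm_prob pin pout C E = Ex (fun A => (E A : nat)%:R).
  rewrite /sbm_prob /Ex big_mkcondr /=; apply: eq_bigr => A _.
  have -> : sbm_weight pin pout C A = W A.
    rewrite /sbm_weight /W pair_big_dep /=; apply: eq_bigr => e _.
    by rewrite /wt /pp /sbm_p.
  by case: (E A); rewrite ?mulr1 ?mulr0.
apply: Ex_le => A HA; case HE: (E A) => /=; first exact: H1.
exact: H0.
Qed.

Lemma prob_compl (E : pred 'M[bool]_n) :
  sbm_prob pin pout C E = 1 - sbm_prob pin pout C (predC E).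
Proof.
have HW : forall A, sbm_weight pin pout C A = W A.
    move=> A; rewrite /sbm_weight /W pair_big_dep /=; apply: eq_bigr => e _.
    by rewrite /wt /pp /sbm_p.
have : Ex (fun _ => 1) = sbm_prob pin pout C E + sbm_prob pin pout C (predC E).
  rewrite /Ex /sbm_prob (bigID E) /=; congr (_ + _);
    by apply: eq_bigr => A _; rewrite HW mulr1.
rewrite Ex1 => ->; ring.
Qed.

Lemma sym_sum (f : 'I_n -> 'I_n -> R) : (forall i j, f i j = f j i) ->
  \sum_i \sum_j f i j = \sum_(e : I | up e) (if e.1 == e.2 then 1 else 2) * f e.1 e.2.
Proof.
move=> Hf; rewrite pair_big /= (bigID up) /=.
have -> : \sum_(e : I | ~~ up e) f e.1 e.2 = \sum_(e : I | (e.1 < e.2)%N) f e.1 e.2.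
  rewrite (reindex (fun e : I => (e.2, e.1))) /=; last first.
    by exists (fun e : I => (e.2, e.1)) => -[].
  by apply: eq_big => e; [rewrite /up -ltnNge | rewrite Hf].
rewrite [X in X + _]big_mkcond [X in _ + X]big_mkcond [RHS]big_mkcond -big_split.
apply: eq_bigr => e _ /=; rewrite /up.
case: (ltngtP e.1 e.2) => H.
- by rewrite ifN ?mul1r ?mulr2n ?mulrDl ?mul1r //; apply/eqP => /(congr1 val) /eqP; rewrite ltn_eqF.
- by rewrite addr0.
- by rewrite ifT ?mul1r ?addr0 //; apply/eqP/val_inj.
Qed.

Definition zz (i : 'I_n) : R := if i \in C then 1 else -1.

Lemma zz2 i : zz i * zz i = 1.
Proof. by rewrite /zz; case: (i \in C); rewrite ?mulr1 ?mulrNN ?mulr1. Qed.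

Lemma sum_zz : ~~ odd n -> #|C| = n./2 -> \sum_i zz i = 0.
Proof.
move=> Hev HC; rewrite (bigID (mem C)) /=.
rewrite (eq_bigr (fun _ => 1)); last by move=> i Hi; rewrite /zz Hi.
rewrite [X in _ + X](eq_bigr (fun _ => -1)); last first.
  by move=> i /negbTE Hi; rewrite /zz Hi.
rewrite !sumr_const.
have Hc := cardsC C; rewrite card_ord in Hc.
have HC' : #|[pred i | i \notin C]| = n./2.
  have -> : #|[pred i | i \notin C]| = #|~: C| by apply: eq_card => i; rewrite !inE.
  have := odd_double_half n; rewrite (negbTE Hev) add0n -addnn => Hn.
  move: Hc Hn; rewrite HC; move: #|~: C| => k; move: n./2 => m H1 H2.
  by apply: (@addnI m); rewrite H1 -H2.
have HC'' : #|[pred i | i \in C]| = n./2.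
  by rewrite -HC; apply: eq_card => i.
by rewrite HC' HC'' mulNrn subrr.
Qed.

Definition pb : R := (pin + pout) / 2.
Definition qq : R := (pin - pout) / 2.

Lemma pp_dec i j : pp (i, j) = pb + qq * (zz i * zz j).
Proof.
rewrite /pp /pb /qq /zz /=.
by case: (i \in C); case: (j \in C) => /=; field.
Qed.

Lemma sum_sq (x : 'I_n -> R) :
  \sum_i \sum_j x i * x j = (\sum_i x i) ^+ 2.
Proof.
rewrite expr2 mulr_suml; apply: eq_bigr => i _; by rewrite mulr_sumr.
Qed.

Lemma sum_const2 (c : R) : \sum_(i < n) \sum_(j < n) c = c * (n%:R ^+ 2).
Proof.
rewrite (eq_bigr (fun _ => c *+ n)); last by move=> i _; rewrite sumr_const card_ord.
by rewrite sumr_const card_ord -(mulr_natr (c *+ n) n) -(mulr_natr c n) -mulrA -expr2.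
Qed.

Lemma sum_pp : ~~ odd n -> #|C| = n./2 ->
  \sum_i \sum_j pp (i, j) = pb * n%:R ^+ 2.
Proof.
move=> Hev HC.
under eq_bigr => i _ do under eq_bigr => j _ do rewrite pp_dec.
under eq_bigr => i _ do rewrite big_split /=.
rewrite big_split /= sum_const2.
under eq_bigr => i _ do rewrite -mulr_sumr.
rewrite -mulr_sumr.
by rewrite sum_sq sum_zz // expr0n mulr0 addr0.
Qed.

Lemma sum_ppz : ~~ odd n -> #|C| = n./2 ->
  \sum_i \sum_j pp (i, j) * (zz i * zz j) = qq * n%:R ^+ 2.
Proof.
move=> Hev HC.
have E : forall i j, pp (i, j) * (zz i * zz j) = pb * (zz i * zz j) + qq.
  by move=> i j; rewrite pp_dec mulrDl; congr (_ + _); rewrite -(mulrA qq) [X in qq * X]mulrACA !zz2 (mulr1 1) (mulr1 qq).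
under eq_bigr => i _ do under eq_bigr => j _ do rewrite E.
under eq_bigr => i _ do rewrite big_split /=.
rewrite big_split /= sum_const2.
under eq_bigr => i _ do rewrite -mulr_sumr.
rewrite -mulr_sumr.
by rewrite sum_sq sum_zz // expr0n mulr0 add0r.
Qed.

Definition Sa (A : 'M[bool]_n) : R := \sum_i \sum_j adjR R A i j.
Definition Ta (A : 'M[bool]_n) : R := \sum_i \sum_j adjR R A i j * (zz i * zz j).
Definition cS (e : I) : R := if e.1 == e.2 then 1 else 2.

Lemma adj_sym (A : 'M[bool]_n) : A^T == A -> forall i j, adjR R A i j = adjR R A j i.
Proof. by move=> /eqP HA i j; rewrite /adjR !mxE -{1}HA mxE. Qed.

Lemma XS (A : 'M[bool]_n) : A^T == A -> ~~ odd n -> #|C| = n./2 ->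
  \sum_(e | up e) cS e * Yc e A = Sa A - pb * n%:R ^+ 2.
Proof.
move=> HA Hev HC.
under eq_bigr => e _ do rewrite /Yc mulrBr.
rewrite sumrB -sum_pp // /Sa (sym_sum (adj_sym HA)).
rewrite (sym_sum (f := fun i j => pp (i, j))); last by move=> i j; rewrite /pp eq_sym.
congr (_ - _); apply: eq_bigr => e _; rewrite /cS ?mxE //.
Qed.

Lemma XT (A : 'M[bool]_n) : A^T == A -> ~~ odd n -> #|C| = n./2 ->
  \sum_(e | up e) (cS e * (zz e.1 * zz e.2)) * Yc e A = Ta A - qq * n%:R ^+ 2.
Proof.
move=> HA Hev HC.
under eq_bigr => e _ do rewrite /Yc mulrBr.
rewrite sumrB -sum_ppz // /Ta.
rewrite (sym_sum (f := fun i j => adjR R A i j * (zz i * zz j))); last first.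
  by move=> i j; rewrite (adj_sym HA) mulrC (mulrC (zz j)) mulrC.
rewrite (sym_sum (f := fun i j => pp (i, j) * (zz i * zz j))); last first.
  by move=> i j; rewrite /pp eq_sym (mulrC (zz j)).
congr (_ - _); apply: eq_bigr => e _; rewrite /cS ?mxE.
  by rewrite -mulrA (mulrC (zz _ * _)).
by rewrite -surjective_pairing -mulrA (mulrC (zz _ * _)).
Qed.

Lemma ZE i j : Zmat R C i j = zz i * zz j.
Proof. by rewrite /Zmat mxE big_ord1 !mxE. Qed.

Lemma modE (A : 'M[bool]_n) i j : modularity (adjR R A) i j = adjR R A i j - Sa A / n%:R ^+ 2.
Proof. by rewrite /modularity !mxE mulr1. Qed.

Lemma adj01 (A : 'M[bool]_n) i j : adjR R A i j * adjR R A i j = adjR R A i j.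
Proof. by rewrite /adjR mxE; case: (A i j); rewrite ?mulr1 ?mulr0. Qed.

Lemma frobM (A : 'M[bool]_n) : (0 < n)%N ->
  frob2 (modularity (adjR R A)) = Sa A - Sa A ^+ 2 / n%:R ^+ 2.
Proof.
move=> Hn; set c := Sa A / n%:R ^+ 2.
rewrite /frob2.
have E : forall i j, modularity (adjR R A) i j ^+ 2 = adjR R A i j * (1 - 2 * c) + c ^+ 2.
  move=> i j; rewrite modE -/c expr2.
  have := adj01 A i j; move: (adjR R A i j) => a Ha.
  rewrite mulrBl !mulrBr Ha; ring.
under eq_bigr => i _ do under eq_bigr => j _ do rewrite E.
under eq_bigr => i _ do rewrite big_split /=.
rewrite big_split /= sum_const2.
under eq_bigr => i _ do rewrite -mulr_suml.
rewrite -mulr_suml -/(Sa A) /c.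
have Hn0 : n%:R != 0 :> R by rewrite pnatr_eq0 -lt0n.
by field.
Qed.

Lemma frobZ : frob2 (Zmat R C) = n%:R ^+ 2.
Proof.
rewrite /frob2 -[RHS]mul1r -sum_const2; apply: eq_bigr => i _.
by apply: eq_bigr => j _; rewrite ZE expr2 mulrACA !zz2 mulr1.
Qed.

Lemma trMZ (A : 'M[bool]_n) : ~~ odd n -> #|C| = n./2 ->
  \tr (modularity (adjR R A) *m (Zmat R C)^T) = Ta A.
Proof.
move=> Hev HC; rewrite /mxtrace.
under eq_bigr => i _ do rewrite mxE.
under eq_bigr => i _ do under eq_bigr => j _ do rewrite modE [X in _ * X]mxE ZE mulrBl.
under eq_bigr => i _ do rewrite sumrB.
rewrite sumrB -/(Ta A).
rewrite (eq_bigr (fun i => Sa A / n%:R ^+ 2 * (zz i * \sum_j zz j))); last first.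
  by move=> i _; rewrite !mulr_sumr; apply: eq_bigr => j _.
by rewrite -mulr_sumr -mulr_suml sum_zz // !mulr0 subr0.
Qed.

Lemma frob0 : frob2 (0 : 'M[R]_n) = 0.
Proof. by rewrite /frob2 big1 // => i _; rewrite big1 // => j _; rewrite mxE expr0n. Qed.

Lemma det_ineq (p q D eps x y : R) :
  D = p * (1 - p) -> 0 < D -> 4 * q ^+ 2 <= 1 -> 0 < eps ->
  let r := D ^+ 2 * eps / (4 * (1 + eps)) in
  (x - p) ^+ 2 < r ^+ 2 -> (y - q) ^+ 2 < r ^+ 2 ->
  D / 2 <= x - x ^+ 2 /\ q ^+ 2 / D - eps <= y ^+ 2 / (x - x ^+ 2).
Proof.
move=> HD D0 Hq He r Hx Hy.
have hp0 : 0 < p by move: D0; rewrite HD => D0; nra.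
have hp1 : p < 1 by move: D0; rewrite HD => D0; nra.
have HD4 : 4 * D <= 1 by rewrite HD; have := sqr_ge0 (2 * p - 1); rewrite expr2; nra.
have r0 : 0 < r.
  rewrite /r; apply: divr_gt0; [apply: mulr_gt0 => //; exact: exprn_gt0 | lra].
have Hr : r * (4 * (1 + eps)) = D ^+ 2 * eps by rewrite /r; field; lra.
have h1 : D ^+ 2 * eps <= D * eps.
  rewrite expr2 -mulrA ler_pM2l // ler_piMl //; [exact: ltW | lra].
have rD : 4 * r <= D.
  have : (4 * r - D) * (1 + eps) <= 0 by nra.
  rewrite pmulr_lle0; lra.
have rE : 2 * r <= eps * D ^+ 2 by nra.
set u := x - p in Hx; set v := y - q in Hy.
have u1 : u < r by nra.
have u2 : - r < u by nra.
have v1 : v < r by nra.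
have v2 : - r < v by nra.
have Hs : x - x ^+ 2 - D = u * (1 - 2 * p) - u ^+ 2 by rewrite /u HD; ring.
have Hab : - r <= u * (1 - 2 * p) <= r by apply/andP; split; nra.
have Hs1 : D - 2 * r <= x - x ^+ 2 by nra.
have Hs2 : x - x ^+ 2 <= D + r by nra.
have Hy2 : q ^+ 2 - r <= y ^+ 2.
  have -> : y = q + v by rewrite /v; ring.
  have : - r <= 2 * q * v by nra.
  nra.
have Hs3 : D / 2 <= x - x ^+ 2 by nra.
split => //.
set s := x - x ^+ 2 in Hs1 Hs2 Hs3 *.
have s0 : 0 < s by nra.
have Hnum : q ^+ 2 * s - y ^+ 2 * D <= r.
  have : q ^+ 2 * s <= q ^+ 2 * (D + r) by apply: ler_wpM2l; [exact: sqr_ge0|].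
  have : y ^+ 2 * D >= (q ^+ 2 - r) * D by apply: ler_wpM2r; [exact: ltW|].
  nra.
rewrite -subr_ge0.
have -> : y ^+ 2 / s - (q ^+ 2 / D - eps) = (y ^+ 2 * D - q ^+ 2 * s + eps * D * s) / (D * s).
  by field; apply/andP; split; apply: lt0r_neq0.
apply: divr_ge0; last by apply: mulr_ge0; apply: ltW.
have : eps * D ^+ 2 / 2 <= eps * D * s.
  have -> : eps * D ^+ 2 / 2 = eps * D * (D / 2) by rewrite expr2; field.
  by apply: ler_wpM2l => //; apply: mulr_ge0; apply: ltW.
nra.
Qed.

Lemma sum_cS : \sum_(e : I | up e) cS e ^+ 2 <= 4 * n%:R ^+ 2.
Proof.
apply: (le_trans (y := \sum_(e : I) (4 : R))).
  rewrite [X in _ <= X](bigID up) /= -[X in X <= _]addr0 lerD //.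
    by apply: ler_sum => e _; rewrite /cS; case: ifP => _; rewrite expr2; lra.
  by apply: sumr_ge0 => e _; lra.
by rewrite sumr_const card_prod card_ord -(mulr_natr (4 : R) (n * n)) natrM expr2.
Qed.

Lemma sum_cT : \sum_(e : I | up e) (cS e * (zz e.1 * zz e.2)) ^+ 2 <= 4 * n%:R ^+ 2.
Proof.
apply: le_trans sum_cS; apply: ler_sum => e _.
have E : (zz e.1 * zz e.2) ^+ 2 = 1 by rewrite expr2 mulrACA !zz2 mulr1.
by rewrite exprMn E mulr1.
Qed.

Lemma main_sec (eps delta : R) : 0 < pin + pout < 2 -> 0 < eps -> 0 < delta ->
  ~~ odd n -> #|C| = n./2 ->
  let D := pb * (1 - pb) in let r := D ^+ 2 * eps / (4 * (1 + eps)) in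
  8 / (r ^+ 2 * delta) < n%:R ->
  1 - delta <= sbm_prob pin pout C (good_event pin pout eps C).
Proof.
move=> Hs He Hd Hev HC D r HN.
case/andP: Hpin => pin0 pin1; case/andP: Hpout => pout0 pout1; case/andP: Hs => s0 s2.
have D0 : 0 < D by rewrite /D /pb; nra.
have Hq : 4 * qq ^+ 2 <= 1 by rewrite /qq; nra.
have r0 : 0 < r.
  rewrite /r; apply: divr_gt0; [apply: mulr_gt0 => //; exact: exprn_gt0 | lra].
have N0 : 0 < 8 / (r ^+ 2 * delta).
  by apply: divr_gt0; [lra | apply: mulr_gt0 => //; exact: exprn_gt0].
have Hn : (0 < n)%N by rewrite -(ltr0n R); apply: lt_trans HN.
have nR0 : 0 < n%:R :> R by rewrite ltr0n.
have n1 : 1 <= n%:R :> R by rewrite ler1n.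
set K := (r * n%:R ^+ 2) ^+ 2.
have K0 : 0 < K by apply: exprn_gt0; apply: mulr_gt0 => //; exact: exprn_gt0.
pose XSf A := \sum_(e | up e) cS e * Yc e A.
pose XTf A := \sum_(e | up e) (cS e * (zz e.1 * zz e.2)) * Yc e A.
rewrite prob_compl lerD2l lerN2.
apply: (le_trans (cheb (X := fun A => K^-1 * XSf A ^+ 2 + K^-1 * XTf A ^+ 2) _ _)).
- move=> A HA Hng.
  rewrite leNgt; move: Hng; apply: contra => HP.
  have HS : XSf A ^+ 2 < K.
    rewrite -(ltr_pM2l (x := K^-1)) ?invr_gt0 // mulVf ?lt0r_neq0 //.
    apply: le_lt_trans HP; rewrite lerDl mulr_ge0 // ?invr_ge0 ?sqr_ge0 // ltW.
  have HT : XTf A ^+ 2 < K.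
    rewrite -(ltr_pM2l (x := K^-1)) ?invr_gt0 // mulVf ?lt0r_neq0 //.
    apply: le_lt_trans HP; rewrite lerDr mulr_ge0 // ?invr_ge0 ?sqr_ge0 // ltW.
  rewrite /XSf XS // in HS; rewrite /XTf XT // in HT.
  set x := Sa A / n%:R ^+ 2; set y := Ta A / n%:R ^+ 2.
  have nn0 : n%:R ^+ 2 != 0 :> R by rewrite expf_neq0 // lt0r_neq0.
  have nn1 : n%:R != 0 :> R by rewrite lt0r_neq0.
  have Hx : (x - pb) ^+ 2 < r ^+ 2.
    have -> : (x - pb) ^+ 2 = (Sa A - pb * n%:R ^+ 2) ^+ 2 / (n%:R ^+ 2) ^+ 2 by rewrite /x; field.
    rewrite ltr_pdivrMr ?exprn_gt0 // -exprMn; exact: HS.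
  have Hy : (y - qq) ^+ 2 < r ^+ 2.
    have -> : (y - qq) ^+ 2 = (Ta A - qq * n%:R ^+ 2) ^+ 2 / (n%:R ^+ 2) ^+ 2 by rewrite /y; field.
    rewrite ltr_pdivrMr ?exprn_gt0 // -exprMn; exact: HT.
  have [Hs1 Hs2] := det_ineq (erefl D) D0 Hq He Hx Hy.
  have sx0 : x - x ^+ 2 != 0 by apply: lt0r_neq0; lra.
  have HF : frob2 (modularity (adjR R A)) = n%:R ^+ 2 * (x - x ^+ 2).
    by rewrite frobM // /x; field.
  apply/andP; split.
    apply/eqP => HM; move: HF; rewrite HM frob0 => /esym /eqP.
    by rewrite mulf_eq0 (negbTE nn0) (negbTE sx0).
  have -> : cos2 (modularity (adjR R A)) (Zmat R C) = y ^+ 2 / (x - x ^+ 2).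
    rewrite /cos2 trMZ // HF frobZ /y; field; apply/andP; split => //.
  have -> : gamma2 pin pout = qq ^+ 2 / D.
    rewrite /gamma2 /qq /D /pb; field.
    by apply/andP; split; apply: lt0r_neq0; lra.
  exact: Hs2.
- move=> A; apply: addr_ge0; apply: mulr_ge0; rewrite ?invr_ge0 ?sqr_ge0 // ltW.
rewrite ExD !ExZ.
have a0 : 0 <= K^-1 by rewrite invr_ge0 ltW.
apply: (le_trans (y := K^-1 * (4 * n%:R ^+ 2) + K^-1 * (4 * n%:R ^+ 2))).
  apply: lerD; apply: ler_wpM2l => //.
    exact: le_trans (var_bound _) sum_cS.
  exact: le_trans (var_bound (fun e => cS e * (zz e.1 * zz e.2))) sum_cT.
set m := n%:R : R in nR0 n1 HN *.
have rd0 : 0 < r ^+ 2 * delta by apply: mulr_gt0 => //; exact: exprn_gt0.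
rewrite ltr_pdivrMr // in HN.
have h2 : m * (r ^+ 2 * delta) <= m ^+ 2 * (r ^+ 2 * delta).
  by apply: ler_wpM2r; [exact: ltW | rewrite expr2; nra].
have h3 : 8 <= m ^+ 2 * (r ^+ 2 * delta) by lra.
rewrite -mulrDr mulrC ler_pdivrMr //.
have -> : delta * K = m ^+ 2 * (m ^+ 2 * (r ^+ 2 * delta)) by rewrite /K; ring.
apply: (le_trans (y := m ^+ 2 * 8)); first lra.
by apply: ler_wpM2l => //; apply: sqr_ge0.
Qed.
End S.


Theorem lemma9 (R : archiRealFieldType) (pin pout : R) :
  0 <= pin <= 1 -> 0 <= pout <= 1 -> 0 < pin + pout < 2 ->
  forall eps : R, 0 < eps ->
  forall delta : R, 0 < delta ->
  exists N : nat, forall n : nat, ~~ odd n -> (N <= n)%N ->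
    forall C : {set 'I_n}, #|C| = n./2 ->
      1 - delta <= sbm_prob pin pout C (good_event pin pout eps C).
Proof.
move=> Hpin Hpout Hs eps He delta Hd.
pose D := pb pin pout * (1 - pb pin pout).
pose r := D ^+ 2 * eps / (4 * (1 + eps)).
have H0 : 0 <= 8 / (r ^+ 2 * delta).
  apply: divr_ge0; first lra.
  by apply: mulr_ge0; [exact: sqr_ge0 | exact: ltW].
exists (Num.Def.archi_bound (8 / (r ^+ 2 * delta))) => n Hev HnN C HC.
apply: (main_sec Hpin Hpout Hs He Hd Hev HC).
apply: (lt_le_trans (archi_boundP H0)).
by rewrite ler_nat.
Qed.
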